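(* Let $d,n\ge 1$, let $\kappa\ge1$ divide $d$, and set $d'=d/\kappa$. Let $A_1,\dots,A_{d'}\in\mathbb{R}^{m\times n^\kappa}$ and $\mathcal{A}(\mathcal{Y})=\mathcal{Y}\times_1A_1\times_2\cdots\times_{d'}A_{d'}$. Suppose each $A_i$ has the RIP$(\varepsilon,\mathcal{S}_{1,2})$ property. Let $\delta=\max\{(1+\varepsilon)^d-1,\,1-(1-\varepsilon)^d\}$ and assume $\delta<1$. Then for all $\mathcal{X}\in\mathbb{R}^{n\times\cdots\times n}$ ($d$ modes) with HOSVD rank $(1,\dots,1)$, $$(1-\delta)\|\mathcal{X}\|^2\le\|\mathcal{A}(\mathcal{R}(\mathcal{X}))\|^2\le(1+\delta)\|\mathcal{X}\|^2.$$
   Context: $\|\cdot\|$ is the Frobenius norm. The $j$-mode product of $\mathcal{X}\in\mathbb{R}^{p_1\times\cdots\times p_D}$ with $U\in\mathbb{R}^{q\times p_j}$ has entries $(\mathcal{X}\times_jU)_{i_1,\dots,\ell,\dots,i_D}=\sum_{i_j}\mathcal{X}_{i_1,\dots,i_j,\dots,i_D}U_{\ell,i_j}$. HOSVD rank $(1,\dots,1)$ means $\mathcal{X}=c\,\mathbf{u}^1\circ\cdots\circ\mathbf{u}^d$ (nonzero rank-one). The reshaping operator $\mathcal{R}$ is the linear map with $\mathcal{R}(\mathbf{x}^1\circ\cdots\circ\mathbf{x}^d)=\bigcirc_{i=1}^{d'}(\mathbf{x}^{\kappa(i-1)+1}\otimes\cdots\otimes\mathbf{x}^{\kappa i})$ ($\circ$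 outer product, $\otimes$ Kronecker product). $\mathcal{S}_1=\{\mathbf{u}^1\otimes\cdots\otimes\mathbf{u}^\kappa:\mathbf{u}^i\in\mathbb{S}^{n-1}\}$, $\mathcal{S}_2=\{(\mathbf{x}+\mathbf{y})/\|\mathbf{x}+\mathbf{y}\|_2:\mathbf{x},\mathbf{y}\in\mathcal{S}_1,\langle\mathbf{x},\mathbf{y}\rangle=0\}$, $\mathcal{S}_{1,2}=\mathcal{S}_1\cup\mathcal{S}_2$. A linear map $L$ has RIP$(\varepsilon,\mathcal{S})$ if $(1-\varepsilon)\|s\|^2\le\|Ls\|^2\le(1+\varepsilon)\|s\|^2$ for all $s\in\mathcal{S}$. *)

(* Defs.v *)
From HB Require Import structures.
From mathcomp Require Import all_boot all_order all_algebra.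
Set Implicit Arguments. Unset Strict Implicit. Unset Printing Implicit Defensive.
Import Order.TTheory GRing.Theory Num.Theory.
Local Open Scope ring_scope.

Definition tensor (R : Type) (D p : nat) := {ffun {ffun 'I_D -> 'I_p} -> R}.

Section Defs.
Variable R : rcfType.

Definition vsqnorm (N : nat) (v : 'cV[R]_N) : R := \sum_(i < N) (v i 0) ^+ 2.

Definition tsqnorm (D p : nat) (X : tensor R D p) : R := \sum_I (X I) ^+ 2.

(* Kronecker (row-major, first factor most significant) linear index of
   (j_0, ..., j_{k-1}) in {0, ..., n^k - 1} *)
Definition kidx (k n : nat) (j : {ffun 'I_k -> 'I_n}) : nat :=
  (\sum_(t < k) val (j t) * n ^ (k.-1 - t))%N.

Definition kron (k n : nat) (x : 'I_k -> 'cV[R]_n) : 'cV[R]_(n ^ k) :=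
  \col_(r < n ^ k) \sum_(j : {ffun 'I_k -> 'I_n})
      (if val r == kidx j then \prod_(t < k) x t (j t) 0 else 0).

Definition S1 (k n : nat) : 'cV[R]_(n ^ k) -> Prop := fun v =>
  exists x : 'I_k -> 'cV[R]_n, (forall t, vsqnorm (x t) = 1) /\ v = kron x.

Definition S2 (k n : nat) : 'cV[R]_(n ^ k) -> Prop := fun v =>
  exists x y, S1 x /\ S1 y /\ (x^T *m y) 0 0 = 0 /\
    v = (Num.sqrt (vsqnorm (x + y)))^-1 *: (x + y).

Definition S12 (k n : nat) : 'cV[R]_(n ^ k) -> Prop := fun v => S1 v \/ S2 v.

Definition RIP (m N : nat) (A : 'M[R]_(m, N)) (eps : R) (S : 'cV[R]_N -> Prop) :=
  forall s, S s ->
    (1 - eps) * vsqnorm s <= vsqnorm (A *m s) <= (1 + eps) * vsqnorm s.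

(* HOSVD rank (1,...,1): X = c u^1 o ... o u^D, nonzero *)
Definition hosvd_rank1 (D n : nat) (X : tensor R D n) : Prop :=
  X != 0 /\ exists (c : R) (u : 'I_D -> 'cV[R]_n),
    forall I, X I = c * \prod_(a < D) u a (I a) 0.

(* value of entry k of a multi-index (0 outside range) *)
Definition Inat (D n : nat) (I : {ffun 'I_D -> 'I_n}) (k : nat) : nat :=
  if insub k is Some a then val (I a) else 0%N.

(* I (a d-mode index) corresponds to J (a d'-mode index of the reshaped
   tensor): mode i of J is the Kronecker index of modes i*kappa, ...,
   i*kappa + kappa - 1 of I. *)
Definition reshape_match (d kappa n d' : nat)
    (I : {ffun 'I_d -> 'I_n}) (J : {ffun 'I_d' -> 'I_(n ^ kappa)}) : bool :=
  [forall i : 'I_d', val (J i) ==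
     (\sum_(t < kappa) Inat I (i * kappa + t) * n ^ (kappa.-1 - t))%N].

(* reshaping operator R : R^{n x ... x n} (d modes) -> R^{n^k x ... x n^k}
   (d' = d / kappa modes); linear, and maps x^1 o ... o x^d to
   o_i (x^{kappa(i-1)+1} (x) ... (x) x^{kappa i}). *)
Definition treshape (d kappa n : nat) (X : tensor R d n) :
    tensor R (d %/ kappa) (n ^ kappa) :=
  [ffun J : {ffun 'I_(d %/ kappa) -> 'I_(n ^ kappa)} => \sum_(I : {ffun 'I_d -> 'I_n}) (if @reshape_match d kappa n (d %/ kappa) I J then X I else 0)].

(* A(Y) = Y x_1 A_1 x_2 ... x_{d'} A_{d'} (iterated mode products, unfolded) *)
Definition Aop (D N m : nat) (A : 'I_D -> 'M[R]_(m, N)) (Y : tensor R D N) :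
    tensor R D m :=
  [ffun L : {ffun 'I_D -> 'I_m} => \sum_(J : {ffun 'I_D -> 'I_N}) Y J * \prod_(i < D) A i (L i) (J i)].

End Defs.

(* Main.v *)
Require Import Defs.
From HB Require Import structures.
From mathcomp Require Import all_boot all_order all_algebra.
From mathcomp Require Import zify ring lra.
Import Order.TTheory GRing.Theory Num.Theory.
Local Open Scope ring_scope.

Lemma kidxS (k n : nat) (j : {ffun 'I_k.+1 -> 'I_n}) :
  kidx j = (j ord0 * n ^ k + kidx [ffun t : 'I_k => j (lift ord0 t)])%N.
Proof.
rewrite /kidx big_ord_recl /= subn0; apply/eqP; rewrite eqn_add2l; apply/eqP.
by apply: eq_bigr => t _; rewrite ffunE /bump /= subnDA subn1.
Qed.

Lemma kidx_lt (k n : nat) (j : {ffun 'I_k -> 'I_n}) : (kidx j < n ^ k)%N.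
Proof.
elim: k j => [|k IH] j.
  by rewrite /kidx big_ord0.
rewrite kidxS expnS.
have h1 := IH [ffun t : 'I_k => j (lift ord0 t)].
have h2 := ltn_ord (j ord0).
set a := kidx _ in h1 *; set b := nat_of_ord (j ord0) in h2 *.
have : (b.+1 * n ^ k <= n * n ^ k)%N by rewrite leq_mul2r h2 orbT.
rewrite mulSn; lia.
Qed.

Lemma kidx_inj (k n : nat) (j1 j2 : {ffun 'I_k -> 'I_n}) : kidx j1 = kidx j2 -> j1 = j2.
Proof.
elim: k j1 j2 => [|k IH] j1 j2 h.
  by apply/ffunP => -[].
move: h; rewrite !kidxS => h.
have hl1 := @kidx_lt k n ([ffun t : 'I_k => j1 (lift ord0 t)]).
have hl2 := @kidx_lt k n ([ffun t : 'I_k => j2 (lift ord0 t)]).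
have hn : (0 < n ^ k)%N by move: hl1; case: (n ^ k)%N.
have e0 : j1 ord0 = j2 ord0.
  apply: val_inj; move: (f_equal (fun x => x %/ n ^ k)%N h).
  by rewrite !divnMDl // !divn_small // !addn0.
have e1 : [ffun t : 'I_k => j1 (lift ord0 t)] = [ffun t : 'I_k => j2 (lift ord0 t)].
  by apply: IH; move: h; rewrite e0 => /addnI.
apply/ffunP => t; case: (unliftP ord0 t) => [t'|] ->; first by move/ffunP: e1 => /(_ t'); rewrite !ffunE.
exact: e0.
Qed.

Lemma vsq_ge0 (R : rcfType) N (v : 'cV[R]_N) : 0 <= vsqnorm v.
Proof. by apply: sumr_ge0 => i _; rewrite sqr_ge0. Qed.

Lemma vsq_eq0 (R : rcfType) N (v : 'cV[R]_N) : vsqnorm v = 0 -> v = 0.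
Proof.
move=> h; apply/matrixP => i j; rewrite (ord1 j) mxE.
have := @psumr_eq0P _ _ xpredT (fun i => v i 0 ^+ 2) (fun i _ => sqr_ge0 _) h i isT.
by move/eqP; rewrite sqrf_eq0 => /eqP.
Qed.

Lemma vsqZ (R : rcfType) N (a : R) (v : 'cV[R]_N) : vsqnorm (a *: v) = a ^+ 2 * vsqnorm v.
Proof.
rewrite /vsqnorm mulr_sumr; apply: eq_bigr => i _; by rewrite mxE exprMn.
Qed.

Lemma sq_if (R : rcfType) (J : finType) (P : pred J) (f : J -> R) :
  (forall j1 j2, P j1 -> P j2 -> j1 = j2) ->
  (\sum_j (if P j then f j else 0)) ^+ 2 = \sum_j (if P j then f j ^+ 2 else 0).
Proof.
move=> hu; rewrite -!big_mkcond /=.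
case: (pickP P) => [j Pj|P0].
  have e : P =1 pred1 j.
    by move=> j'; apply/idP/eqP => [Pj'|->//]; exact: hu.
  by rewrite !(big_pred1 j e).
by rewrite !big_pred0 // expr0n.
Qed.

Lemma kron_norm (R : rcfType) k n (x : 'I_k -> 'cV[R]_n) :
  vsqnorm (kron x) = \prod_t vsqnorm (x t).
Proof.
rewrite /vsqnorm.
transitivity (\sum_(r < n ^ k) \sum_(j : {ffun 'I_k -> 'I_n})
   (if val r == kidx j then (\prod_(t < k) x t (j t) 0) ^+ 2 else 0)).
  apply: eq_bigr => r _; rewrite mxE; apply: sq_if => j1 j2 /eqP h1 /eqP h2.
  by apply: kidx_inj; rewrite -h1 -h2.
rewrite exchange_big /=.
transitivity (\sum_(j : {ffun 'I_k -> 'I_n}) \prod_(t < k) (x t (j t) 0) ^+ 2).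
  apply: eq_bigr => j _; rewrite -big_mkcond /=.
  rewrite (big_pred1 (Ordinal (@kidx_lt k n j))) ?prodrXl //.
by rewrite bigA_distr_bigA.
Qed.

Lemma kronZ (R : rcfType) k n (x y : 'I_k -> 'cV[R]_n) (a : 'I_k -> R) :
  (forall t, x t = a t *: y t) -> kron x = (\prod_t a t) *: kron y.
Proof.
move=> h; apply/matrixP => r c; rewrite !mxE mulr_sumr; apply: eq_bigr => j _.
case: ifP => _; last by rewrite mulr0.
rewrite -big_split /=; apply: eq_bigr => t _; by rewrite h mxE.
Qed.

Lemma vsq0 (R : rcfType) N : vsqnorm (0 : 'cV[R]_N) = 0.
Proof. by rewrite /vsqnorm big1 // => i _; rewrite mxE expr0n. Qed.

Lemma rip_kron (R : rcfType) m k n (A : 'M[R]_(m, n ^ k)) eps (x : 'I_k -> 'cV[R]_n) :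
  RIP A eps (@S12 R k n) ->
  (1 - eps) * \prod_t vsqnorm (x t) <= vsqnorm (A *m kron x) <= (1 + eps) * \prod_t vsqnorm (x t).
Proof.
move=> hA.
case: (boolP [exists t, vsqnorm (x t) == 0]) => [/existsP [t /eqP ht]| /existsPn hz].
  have p0 : \prod_t vsqnorm (x t) = 0 by rewrite (bigD1 t) //= ht mul0r.
  have -> : kron x = 0 by apply: vsq_eq0; rewrite kron_norm.
  by rewrite mulmx0 p0 !mulr0 vsq0 lexx.
pose s t := vsqnorm (x t).
have spos t : 0 < s t by rewrite lt_def hz vsq_ge0.
pose y t := (Num.sqrt (s t))^-1 *: x t.
have hxy t : x t = Num.sqrt (s t) *: y t.
  by rewrite /y scalerA divff ?scale1r // gt_eqF // sqrtr_gt0.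
have yn t : vsqnorm (y t) = 1.
  by rewrite vsqZ exprVn sqr_sqrtr ?mulVf ?gt_eqF // ltW.
have hS : S12 (kron y) by left; exists y.
have := hA _ hS; rewrite kron_norm big1 ?mulr1; last by move=> t _; exact: yn.
rewrite (@kronZ _ _ _ _ _ _ hxy) -scalemxAr vsqZ -prodrXl.
have e : \prod_t Num.sqrt (s t) ^+ 2 = \prod_t s t by apply: eq_bigr => t _; rewrite sqr_sqrtr // ltW.
rewrite e.
have : 0 <= \prod_t s t by apply: prodr_ge0 => t _; exact: ltW.
rewrite /s; set P := \prod_t _; set v := vsqnorm _.
move=> P0 /andP [h1 h2]; apply/andP; split; nra.
Qed.
Set Implicit Arguments. Unset Strict Implicit.

Lemma tsq_rank1 (R : rcfType) D p (T : tensor R D p) (c : R) (v : 'I_D -> 'cV[R]_p) :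
  (forall I, T I = c * \prod_a v a (I a) 0) ->
  tsqnorm T = c ^+ 2 * \prod_a vsqnorm (v a).
Proof.
move=> h; rewrite /tsqnorm /vsqnorm bigA_distr_bigA mulr_sumr.
by apply: eq_bigr => I _; rewrite h exprMn prodrXl.
Qed.

Lemma Aop_rank1 (R : rcfType) D N m (A : 'I_D -> 'M[R]_(m, N)) (Y : tensor R D N) (c : R)
  (k : 'I_D -> 'cV[R]_N) :
  (forall J, Y J = c * \prod_i k i (J i) 0) ->
  forall L, Aop A Y L = c * \prod_i (A i *m k i) (L i) 0.
Proof.
move=> h L; rewrite ffunE.
transitivity (c * \sum_(J : {ffun 'I_D -> 'I_N}) \prod_i (A i (L i) (J i) * k i (J i) 0)).
  rewrite mulr_sumr; apply: eq_bigr => J _; rewrite h big_split /=.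
  set P := \prod_i _; set Q := \prod_i _; ring.
rewrite -(bigA_distr_bigA (fun i r => A i (L i) r * k i r 0)); congr (c * _); apply: eq_bigr => i _; rewrite mxE.
by apply: eq_bigr.
Qed.

Lemma pos_lt d' kap d (hdd : (d' * kap = d)%N) (i : 'I_d') (t : 'I_kap) : (i * kap + t < d)%N.
Proof.
rewrite -hdd; have hi := ltn_ord i; have ht := ltn_ord t.
have : (i.+1 * kap <= d' * kap)%N by rewrite leq_mul2r hi orbT.
rewrite mulSn; lia.
Qed.

Definition pos d' kap d (hdd : (d' * kap = d)%N) (i : 'I_d') (t : 'I_kap) : 'I_d :=
  Ordinal (pos_lt hdd i t).

Lemma q1_lt d' kap d (hdd : (d' * kap = d)%N) (hk : (0 < kap)%N) (a : 'I_d) : (a %/ kap < d')%N.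
Proof. by rewrite ltn_divLR // hdd. Qed.

Definition q1 d' kap d (hdd : (d' * kap = d)%N) (hk : (0 < kap)%N) (a : 'I_d) : 'I_d' :=
  Ordinal (q1_lt hdd hk a).
Definition q2 kap d (hk : (0 < kap)%N) (a : 'I_d) : 'I_kap :=
  Ordinal (ltn_pmod a hk).

Lemma q1_pos d' kap d (hdd : (d' * kap = d)%N) (hk : (0 < kap)%N) i t :
  q1 hdd hk (pos hdd i t) = i.
Proof. by apply: val_inj; rewrite /= divnMDl // divn_small // addn0. Qed.

Lemma q2_pos d' kap d (hdd : (d' * kap = d)%N) (hk : (0 < kap)%N) i t :
  q2 hk (pos hdd i t) = t.
Proof. by apply: val_inj; rewrite /= modnMDl modn_small. Qed.

Lemma pos_q d' kap d (hdd : (d' * kap = d)%N) (hk : (0 < kap)%N) a :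
  pos hdd (q1 hdd hk a) (q2 hk a) = a.
Proof. by apply: val_inj; rewrite /= -divn_eq. Qed.

Lemma prod_split (R : rcfType) d' kap d (hdd : (d' * kap = d)%N) (hk : (0 < kap)%N)
  (F : 'I_d -> R) : \prod_a F a = \prod_i \prod_t F (pos hdd i t).
Proof.
rewrite pair_big /= (reindex (fun p : 'I_d' * 'I_kap => pos hdd p.1 p.2)) /=.
  by apply: eq_bigl.
exists (fun a => (q1 hdd hk a, q2 hk a)) => [[i t] _|a _] /=.
  by rewrite q1_pos q2_pos.
by rewrite pos_q.
Qed.

Lemma prod_if (R : rcfType) (I : finType) (b : I -> bool) (F : I -> R) :
  \prod_i (if b i then F i else 0) = if [forall i, b i] then \prod_i F i else 0.
Proof.
case: ifP => [/forallP h|/negbT /forallPn [i hi]].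
  by apply: eq_bigr => i _; rewrite h.
by rewrite (bigD1 i) //= (negbTE hi) mul0r.
Qed.

Lemma Inat_pos d' kap d n (hdd : (d' * kap = d)%N) (I : {ffun 'I_d -> 'I_n}) (i : 'I_d') (t : 'I_kap) :
  Inat I (i * kap + t) = val (I (pos hdd i t)).
Proof.
rewrite /Inat; case: insubP => [a _ ha|].
  by congr (val (I _)); apply: val_inj; rewrite ha.
by rewrite (pos_lt hdd i t).
Qed.

Lemma treshape_rank1 (R : rcfType) d n kap (hdd : (d %/ kap * kap = d)%N) (hk : (0 < kap)%N)
  (X : tensor R d n) (c : R) (u : 'I_d -> 'cV[R]_n) :
  (forall I, X I = c * \prod_a u a (I a) 0) ->
  forall J, treshape kap X J = c * \prod_i kron (fun t => u (pos hdd i t)) (J i) 0.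
Proof.
move=> h J; rewrite ffunE.
pose g (F : {ffun 'I_(d %/ kap) -> {ffun 'I_kap -> 'I_n}}) : {ffun 'I_d -> 'I_n} :=
  [ffun a => F (q1 hdd hk a) (q2 hk a)].
pose gi (I : {ffun 'I_d -> 'I_n}) : {ffun 'I_(d %/ kap) -> {ffun 'I_kap -> 'I_n}} :=
  [ffun i => [ffun t => I (pos hdd i t)]].
rewrite (reindex g) /=; last first.
  exists gi => [F _|I _].
    by apply/ffunP => i; apply/ffunP => t; rewrite !ffunE q1_pos q2_pos.
  by apply/ffunP => a; rewrite !ffunE pos_q.
transitivity (c * \sum_(F : {ffun 'I_(d %/ kap) -> {ffun 'I_kap -> 'I_n}})
   \prod_i (if val (J i) == kidx (F i) then \prod_t u (pos hdd i t) (F i t) 0 else 0)).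
  rewrite mulr_sumr; apply: eq_bigr => F _; rewrite prod_if.
  have em : reshape_match (g F) J = [forall i, val (J i) == kidx (F i)].
    apply: eq_forallb => i; congr (_ == _); rewrite /kidx; apply: eq_bigr => t _.
    by rewrite (Inat_pos hdd) ffunE q1_pos q2_pos.
  rewrite em; case: ifP => _; last by rewrite mulr0.
  rewrite h (prod_split hdd hk); congr (c * _); apply: eq_bigr => i _; apply: eq_bigr => t _.
  by rewrite ffunE q1_pos q2_pos.
rewrite -(bigA_distr_bigA (fun i (j : {ffun 'I_kap -> 'I_n}) =>
   if val (J i) == kidx j then \prod_t u (pos hdd i t) (j t) 0 else 0)).
congr (c * _); apply: eq_bigr => i _; rewrite mxE; exact: eq_bigr.
Qed.
Unset Implicit Arguments. Set Strict Implicit.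

Theorem proposition1 (R : rcfType) (d n kappa m : nat)
  (hd : (0 < d)%N) (hn : (0 < n)%N) (hk : (0 < kappa)%N) (hkd : (kappa %| d)%N)
  (A : 'I_(d %/ kappa) -> 'M[R]_(m, n ^ kappa)) (eps : R)
  (hA : forall i, RIP (A i) eps (@S12 R kappa n))
  (hdelta : Num.max ((1 + eps) ^+ d - 1) (1 - (1 - eps) ^+ d) < 1) :
  forall X : tensor R d n, hosvd_rank1 X ->
    let delta := Num.max ((1 + eps) ^+ d - 1) (1 - (1 - eps) ^+ d) in
    (1 - delta) * tsqnorm X <= tsqnorm (Aop A (treshape kappa X)) <=
    (1 + delta) * tsqnorm X.
Proof.
move=> X [_ [c [u hX]]]; cbv zeta.
set delta := Num.max _ _.
have hdd : (d %/ kappa * kappa = d)%N by rewrite divnK.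
have hY := treshape_rank1 hdd hk hX.
have hZ := Aop_rank1 A hY.
rewrite (tsq_rank1 hZ) (tsq_rank1 hX) (prod_split hdd hk).
have hd' : (0 < d %/ kappa)%N by rewrite divn_gt0 // dvdn_leq.
have hd'd : (d %/ kappa <= d)%N by rewrite leq_div.
pose i0 : 'I_(d %/ kappa) := Ordinal hd'.
have hab i : (1 - eps) * \prod_t vsqnorm (u (pos hdd i t)) <= vsqnorm (A i *m kron (fun t => u (pos hdd i t)))
    <= (1 + eps) * \prod_t vsqnorm (u (pos hdd i t)) by exact: rip_kron.
have hb i : 0 <= \prod_t vsqnorm (u (pos hdd i t)) by apply: prodr_ge0 => t _; exact: vsq_ge0.
have ha i : 0 <= vsqnorm (A i *m kron (fun t => u (pos hdd i t))) by exact: vsq_ge0.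
have hC : 0 <= c ^+ 2 by rewrite sqr_ge0.
have hdl : 1 - (1 - eps) ^+ d <= delta by rewrite /delta le_max lexx orbT.
have hdu : (1 + eps) ^+ d - 1 <= delta by rewrite /delta le_max lexx.
have hdlt : delta < 1 by [].
case: (ltP eps 0) => he.
  have hb0 i : \prod_t vsqnorm (u (pos hdd i t)) = 0.
    by have := hab i; have := hb i; move=> h0 /andP [h1 h2]; apply/eqP; rewrite eq_le h0 andbT; nra.
  have ha0 i : vsqnorm (A i *m kron (fun t => u (pos hdd i t))) = 0.
    by have := hab i; rewrite hb0 !mulr0 => /andP [h1 h2]; apply/eqP; rewrite eq_le h2 h1.
  have P0 : \prod_i \prod_t vsqnorm (u (pos hdd i t)) = 0 by rewrite (bigD1 i0) //= hb0 mul0r.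
  have Q0 : \prod_i vsqnorm (A i *m kron (fun t => u (pos hdd i t))) = 0 by rewrite (bigD1 i0) //= ha0 mul0r.
  by rewrite P0 Q0 !mulr0 lexx.
have he1 : eps < 1.
  rewrite ltNge; apply/negP => he1.
  have : (1 + eps) ^+ 1 <= (1 + eps) ^+ d by apply: ler_weXn2l => //; lra.
  rewrite expr1; lra.
set P := \prod_i _; set Q := \prod_i _.
have hL : (1 - eps) ^+ (d %/ kappa) * P <= Q.
  have e : \prod_(i < d %/ kappa) (1 - eps) = (1 - eps) ^+ (d %/ kappa) by rewrite prodr_const card_ord.
  rewrite /P /Q -e -big_split /=.
  apply: ler_prod => i _; rewrite mulr_ge0 ?hb //=; last lra.
  by case/andP: (hab i).
have hU : Q <= (1 + eps) ^+ (d %/ kappa) * P.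
  have e : \prod_(i < d %/ kappa) (1 + eps) = (1 + eps) ^+ (d %/ kappa) by rewrite prodr_const card_ord.
  rewrite /P /Q -e -big_split /=.
  apply: ler_prod => i _; rewrite ha /=.
  by case/andP: (hab i).
have h1 : (1 - eps) ^+ d <= (1 - eps) ^+ (d %/ kappa) by apply: ler_wiXn2l => //; lra.
have h2 : (1 + eps) ^+ (d %/ kappa) <= (1 + eps) ^+ d by apply: ler_weXn2l => //; lra.
have hP : 0 <= P by apply: prodr_ge0 => i _; exact: hb.
have hCP : 0 <= c ^+ 2 * P by rewrite mulr_ge0.
set L := (1 - eps) ^+ _ in hL h1; set U := (1 + eps) ^+ (d %/ kappa) in hU h2.
set C := c ^+ 2 in hC hCP *.
apply/andP; split; nra.
Qed.
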